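(* Fix $n\ge3$ and $M>0$ satisfying (A) and (B). In the environment $\Gamma^0$ there exists an SCF $f^*:V^n\to[0,1]$ that is anonymous and BIC in $\Gamma^0$ and satisfies $W^0(f^* )>W^0(f^{(n)})$.
   Context: Fix $n\ge 3$ agents $N=\{1,\dots,n\}$, choosing between Reform $R$ (agent $i$'s utility $v_i$) and Status quo $S$ (utility $0$). Let $M>0$ satisfy (A): $\frac{2}{n}\left[-M^2+M+n-2\right]+\frac{n-2}{n}\left[2M+n-4\right]<0$, and (B): $2M-(n-2)>0$. Let $V=\{-M^2,-1,1,M\}$. For $\epsilon\in[0,1/4]$, the environment $\Gamma^\epsilon$ has independent values $\tilde v_1,\dots,\tilde v_n$ with distributions: for agents $1,2$: $\Pr(-M^2)=0.5-\epsilon$, $\Pr(-1)=\epsilon$, $\Pr(1)=\epsilon$, $\Pr(M)=0.5-\epsilon$; for agents $3,\dots,n$: $\Pr(-M^2)=\epsilon$, $\Pr(-1)=0.5-\epsilon$, $\Pr(1)=0.5-\epsilon$, $\Pr(M)=\epsilon$. (In particular, in $\Gamma^0$ agents 1,2 take values in $\{-M^2,M\}$ and agents $3,\dots,n$ in $\{-1,1\}$, each with probability $1/2$.) An SCF is any $f:V^n\to[0,1]$, defined on all of $V^n$ (including zero-probability profiles). $f$ is anonymous if $f(v)=f(\pi v)$ for all $v\in V^n$ and permutations $\pi$ of $N$, where $\pi v=(v_{\pi(1)},\dots,v_{\pi(n)})$. $f$ is BIC in $\Gamma^\epsilon$ if for every agent $i$ and all reports $v_i,v_i'\in V$: $v_i\,\mathbb{E}^\epsilon(f(v_i,\tilde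 v_{-i}))\ge v_i\,\mathbb{E}^\epsilon(f(v_i',\tilde v_{-i}))$, expectation over $\tilde v_{-i}$ under $\Gamma^\epsilon$. For $v\in V^n$, $\chi(v)=\{i: v_i>0\}$; the unanimity rule is $f^{(n)}(v)=1$ if $|\chi(v)|=n$ and $0$ otherwise. $W^\epsilon(f)=\mathbb{E}^\epsilon\big(f(\tilde v)\sum_i\tilde v_i\big)$. *)

(* Defs.v *)
From mathcomp Require Import all_boot all_order all_algebra all_fingroup.
Set Implicit Arguments. Unset Strict Implicit. Unset Printing Implicit Defensive.
Import Order.TTheory GRing.Theory Num.Theory.
Local Open Scope ring_scope.

(* Values V = {-M^2, -1, 1, M} are indexed by 'I_4 : 0 |-> -M^2, 1 |-> -1,
   2 |-> 1, 3 |-> M.  (Under (A) one has M <> 1, so these four reals are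
   distinct and the indexing is a bijection.)  Agents N = {1..n} are 'I_n,
   agent k+1 being the ordinal k. *)
Definition profile (n : nat) := {ffun 'I_n -> 'I_4}.

Section Env.
Variable R : realFieldType.
Variable n : nat.
Variable M : R.

Definition value (k : 'I_4) : R :=
  match val k with
  | 0%N => - M ^+ 2
  | 1%N => -1
  | 2%N => 1
  | _ => M
  end.

Definition prob (eps : R) (i : 'I_n) (k : 'I_4) : R :=
  if (val i < 2)%N then
    match val k with
    | 0%N => 1/2 - eps | 1%N => eps | 2%N => eps | _ => 1/2 - eps end
  else
    match val k with
    | 0%N => eps | 1%N => 1/2 - eps | 2%N => 1/2 - eps | _ => eps end.

Definition prof_prob (eps : R) (v : profile n) : R :=
  \prod_(j : 'I_n) prob eps j (v j).

Definition interim (eps : R) (f : profile n -> R) (i : 'I_n) (k : 'I_4) : R :=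
  \sum_(v : profile n | v i == k) (\prod_(j : 'I_n | j != i) prob eps j (v j)) * f v.

Definition is_SCF (f : profile n -> R) : Prop :=
  forall v, 0 <= f v <= 1.

Definition permute (p : {perm 'I_n}) (v : profile n) : profile n :=
  [ffun i => v (p i)].

Definition anonymous (f : profile n -> R) : Prop :=
  forall (v : profile n) (p : {perm 'I_n}), f v = f (permute p v).

Definition BIC (eps : R) (f : profile n -> R) : Prop :=
  forall (i : 'I_n) (k k' : 'I_4),
    value k * interim eps f i k' <= value k * interim eps f i k.

Definition chi (v : profile n) : {set 'I_n} := [set i | 0 < value (v i)].

Definition unanimity (v : profile n) : R :=
  if #|chi v| == n then 1 else 0.

Definition welfare (eps : R) (f : profile n -> R) : R :=
  \sum_(v : profile n) prof_prob eps v * (f v * \sum_(i : 'I_n) value (v i)).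

End Env.

Definition condA (R : realFieldType) (n : nat) (M : R) : Prop :=
  (2 / n%:R) * (- M ^+ 2 + M + n%:R - 2)
  + ((n%:R - 2) / n%:R) * (2 * M + n%:R - 4) < 0.

Definition condB (R : realFieldType) (n : nat) (M : R) : Prop :=
  2 * M - (n%:R - 2) > 0.

(* Main.v *)
Require Import Defs.
From mathcomp Require Import all_boot all_order all_algebra all_fingroup.
From mathcomp Require Import zify ring lra.
From Stdlib Require Import Lia.
Import Order.TTheory GRing.Theory Num.Theory.
Local Open Scope ring_scope.

Set Implicit Arguments. Unset Strict Implicit.
Section S.
Variable R : realFieldType.
Variable n : nat.
Variable M : R.
Hypothesis n3 : (3 <= n)%N.
Hypothesis M0 : 0 < M.

Definition i0 : 'I_4 := @Ordinal 4 0 isT.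
Definition i1 : 'I_4 := @Ordinal 4 1 isT.
Definition i2 : 'I_4 := @Ordinal 4 2 isT.
Definition i3 : 'I_4 := @Ordinal 4 3 isT.

Definition cnt (x : 'I_4) (v : profile n) : nat := #|[set j | v j == x]|.
Definition c1 (v : profile n) : bool :=
  (cnt i1 v == 0%N) && ((cnt i0 v == 0%N) || ((cnt i0 v == 1%N) && (cnt i3 v == 0%N))).
Definition c2 (v : profile n) : bool :=
  ((cnt i0 v == 0%N) && (cnt i1 v == 1%N) && (2 <= cnt i3 v)%N)
  || ((cnt i0 v == 3%N) && (cnt i1 v == 0%N)).
Definition tt : R := ((n - 2)%N%:R)^-1.
Definition fs (v : profile n) : R := (c1 v)%:R + tt * (c2 v)%:R.

Lemma cnt_perm x p v : cnt x (permute p v) = cnt x v.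
Proof.
rewrite /cnt.
have -> : [set j | permute p v j == x] = p @^-1: [set j | v j == x].
  by apply/setP=> j; rewrite !inE /permute ffunE.
exact: card_preimset (@perm_inj _ p).
Qed.

Lemma fs_anon : anonymous fs.
Proof. by move=> v p; rewrite /fs /c1 /c2 !cnt_perm. Qed.

Lemma tt_gt0 : 0 < tt.
Proof. rewrite /tt invr_gt0 ltr0n; lia. Qed.

Lemma tt_le1 : tt <= 1.
Proof. rewrite /tt invf_le1 ?ler1n ?ltr0n; lia. Qed.

Lemma c12 v : c1 v -> c2 v = false.
Proof.
rewrite /c1 /c2 => /andP [/eqP -> /orP [/eqP -> //|/andP [/eqP -> _]]].
by rewrite andbF.
Qed.

Lemma fs_SCF : is_SCF fs.
Proof.
move=> v; rewrite /fs; case E: (c1 v); first by rewrite c12 // mulr0 addr0 ler01 lexx.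
rewrite add0r; case: (c2 v); rewrite ?mulr1 ?mulr0 ?lexx ?ler01 //.
by rewrite (ltW tt_gt0) tt_le1.
Qed.

Definition good (j : 'I_n) (x : 'I_4) : bool :=
  if (j < 2)%N then (x == i0) || (x == i3) else (x == i1) || (x == i2).
Definition Si (i : 'I_n) (v : profile n) := [forall j, (j != i) ==> good j (v j)].
Definition Sall (v : profile n) := [forall j, good j (v j)].

Lemma probE j x : prob (0:R) j x = if good j x then 2^-1 else 0.
Proof.
rewrite /prob /good; case: (j < 2)%N; case: x => [[|[|[|[|m]]]] Hm] //=;
  by rewrite ?subr0 ?mul1r.
Qed.

Lemma weightE i (v : profile n) :
  \prod_(j | j != i) prob (0:R) j (v j) = if Si i v then (2^-1)^+n.-1 else 0.
Proof.
case: (boolP (Si i v)) => [/forallP H | /forallPn [j]].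
  rewrite (eq_bigr (fun _ => 2^-1)); last first.
    by move=> j Hj; rewrite probE; have := H j; rewrite Hj /= => ->.
  by rewrite prodr_const cardC1 card_ord.
rewrite negb_imply => /andP [Hj Hg]; by by rewrite (bigD1 j) //= probE (negbTE Hg) mul0r.
Qed.

Lemma pprobE (v : profile n) :
  prof_prob (0:R) v = if Sall v then (2^-1)^+n else 0.
Proof.
rewrite /prof_prob; case: (boolP (Sall v)) => [/forallP H | /forallPn [j Hg]].
  rewrite (eq_bigr (fun _ => 2^-1)); last first.
    by move=> j _; rewrite probE H.
  by rewrite prodr_const card_ord.
by rewrite (bigD1 j) //= probE (negbTE Hg) mul0r.
Qed.

Lemma interimE (f : profile n -> R) i k :
  interim 0 f i k = (2^-1)^+n.-1 * \sum_(v : profile n | (v i == k) && Si i v) f v.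
Proof.
rewrite /interim mulr_sumr big_mkcondr /=; apply: eq_bigr => v _.
by rewrite weightE; case: (Si i v); rewrite ?mul0r.
Qed.

Lemma welfareE (f : profile n -> R) :
  welfare M 0 f = (2^-1)^+n * \sum_(v : profile n | Sall v) f v * \sum_(i : 'I_n) value M (v i).
Proof.
rewrite /welfare mulr_sumr [RHS]big_mkcond /=; apply: eq_bigr => v _.
by rewrite pprobE; case: (Sall v); rewrite ?mul0r ?mulrA.
Qed.

Lemma sum_bool (P : pred (profile n)) (b : profile n -> bool) :
  \sum_(v | P v) ((b v)%:R : R) = #|[set v | P v && b v]|%:R.
Proof.
rewrite -sum1_card natr_sum [RHS]big_mkcond [LHS]big_mkcond /=.
by apply: eq_bigr => v _; rewrite inE; case: (P v); case: (b v).
Qed.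

Lemma sum_fs (P : pred (profile n)) :
  \sum_(v | P v) fs v = #|[set v | P v && c1 v]|%:R + tt * #|[set v | P v && c2 v]|%:R.
Proof. by rewrite big_split /= -mulr_sumr !sum_bool. Qed.

Ltac brute x := move: x; case => [[|[|[|[|?]]]] ?] //.

Definition Aset : {set 'I_n} := [set j : 'I_n | (j < 2)%N].
Definition Bset : {set 'I_n} := ~: Aset.

Lemma n0 : (0 < n)%N. Proof. lia. Qed.
Lemma n1 : (1 < n)%N. Proof. lia. Qed.
Lemma n2 : (2 < n)%N. Proof. lia. Qed.
Definition a0 : 'I_n := Ordinal n0.
Definition a1 : 'I_n := Ordinal n1.
Definition b2 : 'I_n := Ordinal n2.

Lemma cardA : #|Aset| = 2%N.
Proof.
have -> : Aset = [set a0; a1].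
  apply/setP => j; rewrite !inE; case: j => [[|[|j]] Hj] //=.
by rewrite cards2.
Qed.

Lemma cardB : #|Bset| = (n - 2)%N.
Proof. have := cardsC Aset; rewrite cardA card_ord /Bset; lia. Qed.

Lemma cnt0E x v : cnt x v = 0%N -> forall j, v j != x.
Proof.
move=> /eqP; rewrite /cnt cards_eq0 => /eqP H j; apply/negP => E.
have : j \in [set j | v j == x] by rewrite inE E.
by rewrite H inE.
Qed.

Lemma cnt0I x (v : profile n) : (forall j, v j != x) -> cnt x v = 0%N.
Proof.
move=> H; apply/eqP; rewrite /cnt cards_eq0; apply/eqP/setP => j.
by rewrite !inE (negbTE (H j)).
Qed.

Lemma cnt1E x v : cnt x v = 1%N -> exists l, forall j, (v j == x) = (j == l).
Proof.
move=> /eqP /cards1P [l Hl]; exists l => j.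
by have := congr1 (fun A : {set 'I_n} => j \in A) Hl; rewrite !inE.
Qed.

Lemma cnt_set x (v : profile n) (A : {set 'I_n}) :
  (forall j, (v j == x) = (j \in A)) -> cnt x v = #|A|.
Proof. by move=> H; rewrite /cnt (_ : [set j | v j == x] = A) //; apply/setP => j; rewrite inE H. Qed.

Lemma cnt_ge2 x (v : profile n) j1 j2 :
  j1 != j2 -> v j1 = x -> v j2 = x -> (2 <= cnt x v)%N.
Proof.
move=> H12 E1 E2; apply: (@leq_trans #|[set j1; j2]|); first by rewrite cards2 H12.
by apply: subset_leq_card; apply/subsetP => j; rewrite !inE => /orP [] /eqP ->;
  rewrite ?E1 ?E2 eqxx.
Qed.

Lemma cnt_le x (v : profile n) (A : {set 'I_n}) :
  (forall j, v j = x -> j \in A) -> (cnt x v <= #|A|)%N.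
Proof.
move=> H; apply: subset_leq_card; apply/subsetP => j; rewrite inE => /eqP; exact: H.
Qed.

Lemma SiE i v j : Si i v -> j != i -> good j (v j).
Proof. by move=> /forallP /(_ j) /implyP H /H. Qed.

Definition X (c : profile n -> bool) i k : {set profile n} :=
  [set v : profile n | ((v i == k) && Si i v) && c v].

Definition topp (i : 'I_n) (k : 'I_4) : profile n :=
  [ffun j => if j == i then k else if (j < 2)%N then i3 else i2].
Definition botp (i : 'I_n) (k : 'I_4) : profile n :=
  [ffun j => if j == i then k else if (j < 2)%N then i0 else i2].
Definition negp (i : 'I_n) (k : 'I_4) (l : 'I_n) : profile n :=
  [ffun j => if j == i then k else if j == l then i1 else if (j < 2)%N then i3 else i2].

Definition oth (i : 'I_n) : 'I_n := if i == a0 then a1 else a0.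
Lemma othA (i : 'I_n) : (oth i < 2)%N. Proof. by rewrite /oth; case: ifP. Qed.
Lemma oth_neq (i : 'I_n) : (i < 2)%N -> oth i != i.
Proof. by rewrite /oth; case: i => [[|[|m]] Hm] //= _. Qed.
Lemma A_oth (i j : 'I_n) : (i < 2)%N -> (j < 2)%N -> j != i -> j = oth i.
Proof.
rewrite /oth; case: i => [[|[|m]] Hm] //= _; case: j => [[|[|m']] Hm'] //= _ _;
  by apply/val_inj.
Qed.

Lemma inAset (j : 'I_n) : (j \in Aset) = (j < 2)%N. Proof. by rewrite inE. Qed.

Lemma detA (i : 'I_n) (v : profile n) (j : 'I_n) : Si i v -> j != i -> (j < 2)%N -> (v j == i0) || (v j == i3).
Proof. by move=> HS Hji Hj; have := SiE HS Hji; rewrite /good Hj. Qed.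
Lemma detB (i : 'I_n) (v : profile n) (j : 'I_n) : Si i v -> j != i -> ~~ (j < 2)%N -> (v j == i1) || (v j == i2).
Proof. by move=> HS Hji Hj; have := SiE HS Hji; rewrite /good (negbTE Hj). Qed.

Lemma Si_topp i k : Si i (topp i k).
Proof.
apply/forallP => j; apply/implyP => Hji; rewrite /good ffunE (negbTE Hji).
by case: (j < 2)%N.
Qed.
Lemma Si_botp i k : Si i (botp i k).
Proof.
apply/forallP => j; apply/implyP => Hji; rewrite /good ffunE (negbTE Hji).
by case: (j < 2)%N.
Qed.
Lemma Si_negp i k (l : 'I_n) : ~~ (l < 2)%N -> Si i (negp i k l).
Proof.
move=> Hl; apply/forallP => j; apply/implyP => Hji; rewrite /good ffunE (negbTE Hji).
case: (j =P l) => [->|_]; first by rewrite (negbTE Hl).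
by case: (j < 2)%N.
Qed.

Lemma cardAD (i : 'I_n) : (i < 2)%N -> #|Aset :\ i| = 1%N.
Proof. by move=> Hi; have := cardsD1 i Aset; rewrite cardA inAset Hi => -[]. Qed.

Lemma Xvi c i k v : v \in X c i k -> v i = k.
Proof. by rewrite inE => /andP [/andP [/eqP -> _] _]. Qed.
Lemma XSi c i k v : v \in X c i k -> Si i v.
Proof. by rewrite inE => /andP [/andP [_ ->] _]. Qed.
Lemma Xc c i k v : v \in X c i k -> c v.
Proof. by rewrite inE => /andP [_ ->]. Qed.

Lemma inA (i : 'I_n) (v : profile n) (j : 'I_n) : Si i v -> j != i -> (v j == i0) || (v j == i3) -> (j < 2)%N.
Proof.
move=> HS Hji; have := SiE HS Hji; rewrite /good; case: (j < 2)%N => //.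
by move: (v j) => y; case: y => [[|[|[|[|?]]]] ?].
Qed.
Lemma inB (i : 'I_n) (v : profile n) (j : 'I_n) : Si i v -> j != i -> (v j == i1) -> ~~ (j < 2)%N.
Proof.
move=> HS Hji; have := SiE HS Hji; rewrite /good; case: (j < 2)%N => //.
by move: (v j) => y; case: y => [[|[|[|[|?]]]] ?].
Qed.

Lemma e03_0 (y : 'I_4) : (y == i0) || (y == i3) -> y != i3 -> y = i0.
Proof. by case: y => [[|[|[|[|?]]]] ?] //= _ _; apply/val_inj. Qed.
Lemma e03_3 (y : 'I_4) : (y == i0) || (y == i3) -> y != i0 -> y = i3.
Proof. by case: y => [[|[|[|[|?]]]] ?] //= _ _; apply/val_inj. Qed.
Lemma e12_2 (y : 'I_4) : (y == i1) || (y == i2) -> y != i1 -> y = i2.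
Proof. by case: y => [[|[|[|[|?]]]] ?] //= _ _; apply/val_inj. Qed.

Lemma cntA2 (i : 'I_n) v x : Si i v -> ((i < 2)%N || (v i != x)) ->
  (x == i0) || (x == i3) -> (cnt x v <= 2)%N.
Proof.
move=> HS Hi Hx; rewrite -cardA; apply: cnt_le => j Ej; rewrite inAset.
case: (j =P i) => [Eji|/eqP Hji].
  by move: Hi; rewrite -Eji Ej eqxx orbF.
by apply: (inA HS Hji); rewrite Ej.
Qed.

Lemma cntAD (i : 'I_n) v x : (i < 2)%N -> Si i v -> v i != x ->
  (x == i0) || (x == i3) -> (cnt x v <= 1)%N.
Proof.
move=> Hi HS Hvi Hx; rewrite -(cardAD Hi); apply: cnt_le => j Ej; rewrite !inE.
case: (j =P i) => [Eji|/eqP Hji]; first by move: Hvi; rewrite -Eji Ej eqxx.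
by apply: (inA HS Hji); rewrite Ej.
Qed.

Lemma a0A : (a0 < 2)%N. Proof. by []. Qed.
Lemma a1A : (a1 < 2)%N. Proof. by []. Qed.
Lemma a01 : a0 != a1. Proof. by []. Qed.

Lemma neqA (i j : 'I_n) : ~~ (i < 2)%N -> (j < 2)%N -> j != i.
Proof. by move=> Hi Hj; apply/eqP => E; move: Hi; rewrite -E Hj. Qed.

Lemma XA0c1 (i : 'I_n) : (i < 2)%N -> X c1 i i0 = set0.
Proof.
move=> Hi; apply/setP => v; rewrite in_set0; apply/negP => Hv.
have Hvi := Xvi Hv; have HS := XSi Hv.
move: (Xc Hv) => /andP [/eqP H1 /orP [/eqP H0 | /andP [/eqP H0 /eqP H3]]].
  by have := cnt0E H0 i; rewrite Hvi.
have Ho := e03_0 (detA HS (oth_neq Hi) (othA i)) (cnt0E H3 (oth i)).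
by have := cnt_ge2 (oth_neq Hi) Ho Hvi; rewrite H0.
Qed.

Lemma XA0c2 (i : 'I_n) : (i < 2)%N -> X c2 i i0 = set0.
Proof.
move=> Hi; apply/setP => v; rewrite in_set0; apply/negP => Hv.
have Hvi := Xvi Hv; have HS := XSi Hv.
move: (Xc Hv) => /orP [/andP [/andP [/eqP H0 _] _] | /andP [/eqP H0 _]].
  by have := cnt0E H0 i; rewrite Hvi.
by have := cntA2 HS (introT orP (or_introl Hi)) (isT : (i0 == i0) || (i0 == i3)); rewrite H0.
Qed.

Lemma X1c1 (i : 'I_n) : X c1 i i1 = set0.
Proof.
apply/setP => v; rewrite in_set0; apply/negP => Hv.
have Hvi := Xvi Hv.
move: (Xc Hv) => /andP [/eqP H1 _].
by have := cnt0E H1 i; rewrite Hvi.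
Qed.

Lemma XA1c2 (i : 'I_n) : (i < 2)%N -> X c2 i i1 = set0.
Proof.
move=> Hi; apply/setP => v; rewrite in_set0; apply/negP => Hv.
have Hvi := Xvi Hv; have HS := XSi Hv.
move: (Xc Hv) => /orP [/andP [/andP [_ _] H3] | /andP [_ /eqP H1]].
  have := cntAD Hi HS (_ : v i != i3) (isT : (i3 == i0) || (i3 == i3)).
  by rewrite Hvi => /(_ isT); case: (cnt i3 v) H3 => [|[|]].
by have := cnt0E H1 i; rewrite Hvi.
Qed.

Lemma XA2c2 (i : 'I_n) : (i < 2)%N -> X c2 i i2 = set0.
Proof.
move=> Hi; apply/setP => v; rewrite in_set0; apply/negP => Hv.
have Hvi := Xvi Hv; have HS := XSi Hv.
move: (Xc Hv) => /orP [/andP [/andP [_ _] H3] | /andP [/eqP H0 _]].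
  have := cntAD Hi HS (_ : v i != i3) (isT : (i3 == i0) || (i3 == i3)).
  by rewrite Hvi => /(_ isT); case: (cnt i3 v) H3 => [|[|]].
have := cntAD Hi HS (_ : v i != i0) (isT : (i0 == i0) || (i0 == i3)).
by rewrite Hvi H0 => /(_ isT).
Qed.

Lemma cnt_topp0 (i : 'I_n) k : k != i0 -> cnt i0 (topp i k) = 0%N.
Proof. by move=> Hk; apply: cnt0I => j; rewrite ffunE; case: (j == i); case: (j < 2)%N. Qed.
Lemma cnt_topp1 (i : 'I_n) k : k != i1 -> cnt i1 (topp i k) = 0%N.
Proof. by move=> Hk; apply: cnt0I => j; rewrite ffunE; case: (j == i); case: (j < 2)%N. Qed.

Lemma topp_eq (i : 'I_n) k (v : profile n) : v i = k -> Si i v -> cnt i0 v = 0%N -> cnt i1 v = 0%N ->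
  v = topp i k.
Proof.
move=> Hvi HS H0 H1; apply/ffunP => j; rewrite ffunE.
case: (j =P i) => [->//|/eqP Hji]; case: ifP => Hj.
  exact: e03_3 (detA HS Hji Hj) (cnt0E H0 j).
exact: e12_2 (detB HS Hji (negbT Hj)) (cnt0E H1 j).
Qed.

Lemma XA2c1 (i : 'I_n) : (i < 2)%N -> X c1 i i2 = [set topp i i2; botp i i2].
Proof.
move=> Hi; apply/setP => v; apply/idP/idP => Hv.
  have Hvi := Xvi Hv; have HS := XSi Hv; rewrite !inE; apply/orP.
  move: (Xc Hv) => /andP [/eqP H1 /orP [/eqP H0 | /andP [/eqP H0 /eqP H3]]].
    by left; apply/eqP; apply: topp_eq.
  right; apply/eqP/ffunP => j; rewrite ffunE.
  case: (j =P i) => [->//|/eqP Hji]; case: ifP => Hj.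
    exact: e03_0 (detA HS Hji Hj) (cnt0E H3 j).
  exact: e12_2 (detB HS Hji (negbT Hj)) (cnt0E H1 j).
move: Hv; rewrite !inE => /orP [] /eqP ->; rewrite ffunE eqxx /=.
  by rewrite Si_topp /c1 cnt_topp0 // cnt_topp1.
rewrite Si_botp /c1.
have -> : cnt i1 (botp i i2) = 0%N.
  by apply: cnt0I => j; rewrite ffunE; case: (j == i); case: (j < 2)%N.
have -> : cnt i3 (botp i i2) = 0%N.
  by apply: cnt0I => j; rewrite ffunE; case: (j == i); case: (j < 2)%N.
rewrite (@cnt_set _ _ [set oth i]) ?cards1 ?orbT // => j; rewrite ffunE inE.
case: (j =P i) => [->|/eqP Hji]; first by apply/esym/negP => /eqP E; move: (oth_neq Hi); rewrite -E eqxx.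
case: (boolP (j < 2)%N) => Hj; first by rewrite -(A_oth Hi Hj Hji) !eqxx.
by apply/esym/negP => /eqP E; move: Hj; rewrite E othA.
Qed.

Lemma XTc1 (i : 'I_n) k : (k == i3) || ((k == i2) && ~~ (i < 2)%N) ->
  X c1 i k = [set topp i k].
Proof.
move=> Hk; apply/setP => v; apply/idP/idP => Hv.
  have Hvi := Xvi Hv; have HS := XSi Hv; rewrite !inE.
  move: (Xc Hv) => /andP [/eqP H1 /orP [/eqP H0 | /andP [/eqP H0 /eqP H3]]].
    by apply/eqP; apply: topp_eq.
  exfalso; move: Hk => /orP [/eqP Ek | /andP [/eqP Ek Hi]].
    by have := cnt0E H3 i; rewrite Hvi Ek.
  have E0 := e03_0 (detA HS (neqA Hi a0A) a0A) (cnt0E H3 a0).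
  have E1 := e03_0 (detA HS (neqA Hi a1A) a1A) (cnt0E H3 a1).
  by have := cnt_ge2 a01 E0 E1; rewrite H0.
move: Hv; rewrite !inE => /eqP ->; rewrite ffunE eqxx /=.
by rewrite Si_topp /c1 cnt_topp0 ?cnt_topp1 //; move: Hk => /orP [/eqP ->| /andP [/eqP -> _]].
Qed.

Lemma XTc2 (i : 'I_n) k : (k == i3) || ((k == i2) && ~~ (i < 2)%N) ->
  X c2 i k = negp i k @: (Bset :\ i).
Proof.
move=> Hk; have Hk0 : k != i0 by case/orP: Hk => [/eqP -> | /andP [/eqP -> _]].
have Hk1 : k != i1 by case/orP: Hk => [/eqP -> | /andP [/eqP -> _]].
apply/setP => v; apply/idP/idP => Hv.
  have Hvi := Xvi Hv; have HS := XSi Hv.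
  move: (Xc Hv) => /orP [/andP [/andP [/eqP H0 /eqP H1] H3] | /andP [/eqP H0 _]]; last first.
    by have := cntA2 HS (_ : (i < 2)%N || (v i != i0)) (isT : (i0 == i0) || (i0 == i3));
      rewrite H0 Hvi Hk0 orbT => /(_ isT).
  have [l Hl] := cnt1E H1.
  have Hli : l != i by apply/eqP => E; have := Hl i; rewrite Hvi -E eqxx (negbTE Hk1).
  have HlB : ~~ (l < 2)%N by apply: (inB HS Hli); rewrite Hl eqxx.
  apply/imsetP; exists l; first by rewrite !inE Hli.
  apply/ffunP => j; rewrite ffunE.
  case: (j =P i) => [->//|/eqP Hji]; case: (j =P l) => [->|/eqP Hjl].
    by apply/eqP; rewrite Hl.
  case: ifP => Hj.
    exact: e03_3 (detA HS Hji Hj) (cnt0E H0 j).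
  by apply: e12_2 (detB HS Hji (negbT Hj)) _; rewrite Hl.
move: Hv => /imsetP [l]; rewrite !inE => /andP [Hli HlB] ->.
rewrite ffunE eqxx eqxx Si_negp //= /c2.
have -> : cnt i0 (negp i k l) = 0%N.
  apply: cnt0I => j; rewrite ffunE; case: (j == i) => //; case: (j == l) => //.
  by case: (j < 2)%N.
have -> : cnt i1 (negp i k l) = 1%N.
  rewrite (@cnt_set _ _ [set l]) ?cards1 // => j; rewrite ffunE inE.
  case: (j =P i) => [->|_]; first by rewrite (negbTE Hk1) eq_sym (negbTE Hli).
  by case: (j == l) => //; case: (j < 2)%N.
have E3 : forall j : 'I_n, (j < 2)%N -> negp i k l j = i3.
  move=> j Hj; rewrite ffunE; case: (j =P i) => [Eji|_].
    by move: Hk => /orP [/eqP //| /andP [_ Hi]]; move: Hi; rewrite -Eji Hj.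
  have -> : (j == l) = false by apply/eqP => E; move: HlB; rewrite -E Hj.
  by rewrite Hj.
by rewrite (cnt_ge2 a01 (E3 _ a0A) (E3 _ a1A)).
Qed.

Lemma card_negp (i : 'I_n) k : #|negp i k @: (Bset :\ i)| = #|Bset :\ i|.
Proof.
apply: card_in_imset => l1 l2; rewrite !inE => /andP [H1 _] _ E.
have := congr1 (fun w : profile n => w l1) E; rewrite !ffunE (negbTE H1) eqxx.
case: (l1 =P l2) => // _; by case: (l1 < 2)%N.
Qed.

Lemma cardBD (i : 'I_n) : #|Bset :\ i| = (n - 2 - ~~ (i < 2)%N)%N.
Proof. have := cardsD1 i Bset; rewrite cardB !inE => ->; by rewrite addKn. Qed.

Lemma XB0c1 (i : 'I_n) : ~~ (i < 2)%N -> X c1 i i0 = set0.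
Proof.
move=> Hi; apply/setP => v; rewrite in_set0; apply/negP => Hv.
have Hvi := Xvi Hv; have HS := XSi Hv.
move: (Xc Hv) => /andP [/eqP H1 /orP [/eqP H0 | /andP [/eqP H0 /eqP H3]]].
  by have := cnt0E H0 i; rewrite Hvi.
have E0 := e03_0 (detA HS (neqA Hi a0A) a0A) (cnt0E H3 a0).
have E1 := e03_0 (detA HS (neqA Hi a1A) a1A) (cnt0E H3 a1).
by have := cnt_ge2 a01 E0 E1; rewrite H0.
Qed.

Lemma XB0c2 (i : 'I_n) : ~~ (i < 2)%N -> X c2 i i0 = [set botp i i0].
Proof.
move=> Hi; apply/setP => v; apply/idP/idP => Hv.
  have Hvi := Xvi Hv; have HS := XSi Hv; rewrite !inE.
  move: (Xc Hv) => /orP [/andP [/andP [/eqP H0 _] _] | /andP [/eqP H0 /eqP H1]].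
    by have := cnt0E H0 i; rewrite Hvi.
  apply/eqP/ffunP => j; rewrite ffunE.
  case: (j =P i) => [->//|/eqP Hji]; case: ifP => Hj; last first.
    exact: e12_2 (detB HS Hji (negbT Hj)) (cnt0E H1 j).
  move: (detA HS Hji Hj) => /orP [/eqP //| /eqP E3]; exfalso.
  have : (cnt i0 v <= #|[set i; oth j]|)%N.
    apply: cnt_le => j' Ej'; rewrite !inE; case: (j' =P i) => //= /eqP Hj'i.
    have Hj' : (j' < 2)%N by apply: (inA HS Hj'i); rewrite Ej'.
    have Hj'j : j' != j by apply/eqP => E; move: E3; rewrite -E Ej'.
    by rewrite -(A_oth Hj Hj' Hj'j).
  by rewrite H0 cards2; case: (i != oth j).
move: Hv; rewrite !inE => /eqP ->; rewrite ffunE eqxx Si_botp /= /c2.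
have -> : cnt i1 (botp i i0) = 0%N.
  by apply: cnt0I => j; rewrite ffunE; case: (j == i); case: (j < 2)%N.
rewrite (@cnt_set _ _ (i |: Aset)) ?cardsU1 ?cardA ?inAset ?Hi ?orbT // => j.
rewrite ffunE !inE; case: (j == i) => //; by case: (j < 2)%N.
Qed.

Lemma XB1c2 (i : 'I_n) : ~~ (i < 2)%N -> X c2 i i1 = [set topp i i1].
Proof.
move=> Hi; apply/setP => v; apply/idP/idP => Hv.
  have Hvi := Xvi Hv; have HS := XSi Hv; rewrite !inE.
  move: (Xc Hv) => /orP [/andP [/andP [/eqP H0 /eqP H1] _] | /andP [_ /eqP H1]]; last first.
    by have := cnt0E H1 i; rewrite Hvi.
  have [l Hl] := cnt1E H1.
  have Eli : i = l by apply/eqP; rewrite -Hl Hvi.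
  apply/eqP/ffunP => j; rewrite ffunE.
  case: (j =P i) => [->//|/eqP Hji]; case: ifP => Hj.
    exact: e03_3 (detA HS Hji Hj) (cnt0E H0 j).
  by apply: e12_2 (detB HS Hji (negbT Hj)) _; rewrite Hl -Eli.
move: Hv; rewrite !inE => /eqP ->; rewrite ffunE eqxx Si_topp /= /c2 cnt_topp0 //.
have E3 : forall j : 'I_n, (j < 2)%N -> topp i i1 j = i3.
  by move=> j Hj; rewrite ffunE (negbTE (neqA Hi Hj)) Hj.
rewrite (cnt_ge2 a01 (E3 _ a0A) (E3 _ a1A)).
rewrite (@cnt_set _ _ [set i]) ?cards1 // => j; rewrite ffunE inE.
by case: (j == i) => //; case: (j < 2)%N.
Qed.

Definition J (i : 'I_n) k : R := #|X c1 i k|%:R + tt * #|X c2 i k|%:R.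

Lemma interimJ i k : interim 0 fs i k = (2^-1)^+n.-1 * J i k.
Proof. by rewrite interimE sum_fs. Qed.

Definition pos (k : 'I_4) := (k == i2) || (k == i3).

Lemma ttn2 : tt * (n - 2)%N%:R = 1.
Proof. rewrite /tt mulVf // pnatr_eq0; lia. Qed.

Lemma JA (i : 'I_n) k : (i < 2)%N -> J i k = if pos k then 2 else 0.
Proof.
move=> Hi; rewrite /J /pos; case: k => [[|[|[|[|?]]]] Hk] //=.
- have -> : Ordinal Hk = i0 by apply/val_inj.
  by rewrite XA0c1 // XA0c2 // cards0 mulr0 addr0.
- have -> : Ordinal Hk = i1 by apply/val_inj.
  by rewrite X1c1 // XA1c2 // cards0 mulr0 addr0.
- have -> : Ordinal Hk = i2 by apply/val_inj.
  rewrite XA2c1 // XA2c2 // cards0 mulr0 addr0 cards2.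
  suff -> : topp i i2 != botp i i2 by [].
  apply/negP => /eqP E; have := congr1 (fun w : profile n => w (oth i)) E.
  by rewrite !ffunE (negbTE (oth_neq Hi)) othA.
- have -> : Ordinal Hk = i3 by apply/val_inj.
  rewrite XTc1 // XTc2 // cards1 card_negp cardBD Hi /= subn0 ttn2.
  by [].
Qed.

Lemma JB (i : 'I_n) k : ~~ (i < 2)%N ->
  J i k = if pos k then 1 + tt * (n - 2 - 1)%N%:R else tt.
Proof.
move=> Hi; rewrite /J /pos; case: k => [[|[|[|[|?]]]] Hk] //=.
- have -> : Ordinal Hk = i0 by apply/val_inj.
  by rewrite XB0c1 // XB0c2 // cards0 cards1 mulr1 add0r.
- have -> : Ordinal Hk = i1 by apply/val_inj.
  by rewrite X1c1 // XB1c2 // cards0 cards1 mulr1 add0r.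
- have -> : Ordinal Hk = i2 by apply/val_inj.
  by rewrite XTc1 ?Hi // XTc2 ?Hi // cards1 card_negp cardBD Hi.
- have -> : Ordinal Hk = i3 by apply/val_inj.
  by rewrite XTc1 // XTc2 // cards1 card_negp cardBD Hi.
Qed.

Lemma BIC_shape (I : 'I_4 -> R) L H : L <= H ->
  (forall k, I k = if pos k then H else L) ->
  forall k k', value M k * I k' <= value M k * I k.
Proof.
move=> LH HI k k'.
have HL : L <= I k' by rewrite HI; case: (pos k').
have HH : I k' <= H by rewrite HI; case: (pos k').
rewrite [I k]HI /pos /value; case: k => [[|[|[|[|?]]]] Hk] //=.
- apply: (@ler_wnM2l _ _ _ _ _ HL); rewrite oppr_le0; exact: sqr_ge0.
- apply: (@ler_wnM2l _ _ _ _ _ HL); by rewrite oppr_le0.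
- by rewrite !mul1r.
- exact: (@ler_wpM2l _ _ (ltW M0) _ _ HH).
Qed.

Lemma fs_BIC : BIC M 0 fs.
Proof.
move=> i k k'; rewrite /BIC !interimJ.
have Hc : 0 <= (2^-1 : R)^+n.-1 by apply: exprn_ge0; rewrite invr_ge0.
case: (boolP (i < 2)%N) => Hi.
  apply: (@BIC_shape (fun k => (2^-1)^+n.-1 * J i k) 0 ((2^-1)^+n.-1 * 2)).
    by apply: mulr_ge0.
  by move=> k0; rewrite JA //; case: (pos k0); rewrite ?mulr0.
apply: (@BIC_shape (fun k => (2^-1)^+n.-1 * J i k) ((2^-1)^+n.-1 * tt)
   ((2^-1)^+n.-1 * (1 + tt * (n - 2 - 1)%N%:R))).
  apply: (@ler_wpM2l _ _ Hc); rewrite -[X in X <= _]addr0 lerD ?tt_le1 //.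
  by apply: mulr_ge0; [exact: ltW tt_gt0 | exact: ler0n].
by move=> k0; rewrite JB //; case: (pos k0).
Qed.

Lemma fiber (F : 'I_4 -> R) (v : profile n) :
  \sum_(j : 'I_n) F (v j) = \sum_(x : 'I_4) (cnt x v)%:R * F x.
Proof.
rewrite (partition_big v predT) //=; apply: eq_bigr => x _.
rewrite (eq_bigr (fun _ => F x)); last by move=> j /eqP ->.
rewrite sumr_const /cnt mulr_natl; congr (_ *+ _).
by apply: eq_card => j; rewrite !inE.
Qed.

Lemma sum4 (G : 'I_4 -> R) : \sum_(x : 'I_4) G x = G i0 + G i1 + G i2 + G i3.
Proof.
rewrite !big_ord_recl big_ord0 addr0 !addrA.
by congr (_ + _ + _ + _); congr G; apply/val_inj.
Qed.

Lemma value_pos x : (0 < value M x) = pos x.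
Proof.
rewrite /value /pos; case: x => [[|[|[|[|?]]]] Hx] //=.
- by rewrite oppr_gt0 ltNge sqr_ge0.
- by rewrite oppr_gt0 ltr10.
- by rewrite ltr01.
Qed.

Lemma unanE v : unanimity M v = ((cnt i0 v == 0%N) && (cnt i1 v == 0%N))%:R.
Proof.
rewrite /unanimity.
have -> : (#|chi M v| == n) = ((cnt i0 v == 0%N) && (cnt i1 v == 0%N)).
  apply/idP/idP.
    move=> /eqP Hc.
    have HT : chi M v = setT by apply/eqP; rewrite eqEcard subsetT cardsT card_ord Hc leqnn.
    apply/andP; split; apply/eqP; apply: cnt0I => j;
      have := congr1 (fun A : {set 'I_n} => j \in A) HT; rewrite !inE value_pos /pos;
      by move: (v j) => y; case: y => [[|[|[|[|?]]]] ?].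
  move=> /andP [/eqP H0 /eqP H1].
  have -> : chi M v = setT.
    apply/setP => j; rewrite !inE value_pos /pos.
    have := cnt0E H0 j; have := cnt0E H1 j.
    by move: (v j) => y; case: y => [[|[|[|[|?]]]] ?].
  by rewrite cardsT card_ord.
by case: (_ && _).
Qed.

Lemma Sall_Si (i : 'I_n) (v : profile n) : Sall v -> Si i v.
Proof. by move=> /forallP H; apply/forallP => j; apply/implyP. Qed.

Lemma SallA (v : profile n) (j : 'I_n) : Sall v -> (j < 2)%N -> (v j == i0) || (v j == i3).
Proof. by move=> /forallP /(_ j); rewrite /good => + Hj; rewrite Hj. Qed.

Lemma c1_Sall (v : profile n) : Sall v -> c1 v = (cnt i0 v == 0%N) && (cnt i1 v == 0%N).
Proof.
move=> HS; rewrite /c1; case: (cnt i1 v == 0%N); last by rewrite andbF.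
case: (boolP (cnt i0 v == 0%N)) => H0; first by rewrite andbT.
rewrite andbT /=; apply/negP => /andP [/eqP H0' /eqP H3].
have E0 := e03_0 (SallA HS a0A) (cnt0E H3 a0).
have E1 := e03_0 (SallA HS a1A) (cnt0E H3 a1).
by have := cnt_ge2 a01 E0 E1; rewrite H0'.
Qed.

Lemma s_c2 (v : profile n) : Sall v -> c2 v ->
  \sum_(i : 'I_n) value M (v i) = - 1 + (n%:R - 3) + 2 * M.
Proof.
move=> HS; rewrite /c2 => /orP [/andP [/andP [/eqP H0 /eqP H1] _] | /andP [/eqP H0 _]];
  last first.
  by have := @cntA2 a0 v i0 (Sall_Si a0 HS) isT isT; rewrite H0.
have H3 : cnt i3 v = 2%N.
  rewrite -cardA; apply: cnt_set => j; rewrite inAset.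
  case: (boolP (j < 2)%N) => Hj.
    by apply/eqP; apply: e03_3 (SallA HS Hj) (cnt0E H0 j).
  have := (forallP HS) j; rewrite /good (negbTE Hj).
  by move: (v j) => y; case: y => [[|[|[|[|?]]]] ?].
have Hn := fiber (fun _ => 1) v.
rewrite sum4 sumr_const card_ord H0 H1 H3 !mulr1 in Hn.
rewrite fiber sum4 H0 H1 H3 /value /=.
have -> : (cnt i2 v)%:R = n%:R - 3 :> R.
  by rewrite Hn; lra.
lra.
Qed.

Lemma welfare_gt : condB n M -> welfare M 0 (unanimity M (n:=n)) < welfare M 0 fs.
Proof.
move=> HB; rewrite !welfareE.
pose K : R := - 1 + (n%:R - 3) + 2 * M.
have E : \sum_(v : profile n | Sall v) fs v * \sum_(i : 'I_n) value M (v i) =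
    \sum_(v : profile n | Sall v) unanimity M v * \sum_(i : 'I_n) value M (v i)
    + tt * \sum_(v : profile n | Sall v && c2 v) \sum_(i : 'I_n) value M (v i).
  rewrite big_mkcondr mulr_sumr -big_split /=; apply: eq_bigr => v Hv.
  rewrite /fs c1_Sall // -unanE; case: (c2 v); rewrite ?mulr1 ?mulr0 ?addr0 //.
  by rewrite mulrDl.
rewrite E mulrDr ltrDl.
rewrite (eq_bigr (fun _ => K)); last by move=> v /andP [h1 h2]; exact: s_c2.
rewrite sumr_const; apply: mulr_gt0; first by apply: exprn_gt0; rewrite invr_gt0.
apply: mulr_gt0; first exact: tt_gt0.
rewrite pmulrn_lgt0.
  have H3n : (3%:R : R) <= n%:R by rewrite ler_nat.
  move: HB; rewrite /condB /K; lra.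
apply/card_gt0P; exists (topp b2 i1).
change (Sall (topp b2 i1) && c2 (topp b2 i1)).
have Hb : ~~ (b2 < 2)%N by [].
rewrite (Xc (_ : topp b2 i1 \in X c2 b2 i1)); last by rewrite XB1c2 // inE.
rewrite andbT; apply/forallP => j; case: (j =P b2) => [->|/eqP H].
  by rewrite ffunE eqxx /good.
exact: (SiE (Si_topp b2 i1) H).
Qed.
End S.

Unset Implicit Arguments.

Theorem lemma5 (R : realFieldType) (n : nat) (M : R) :
  (3 <= n)%N -> 0 < M -> condA n M -> condB n M ->
  exists fstar : profile n -> R,
    [/\ is_SCF fstar, anonymous fstar, BIC M 0 fstar &
        welfare M 0 (unanimity M (n:=n)) < welfare M 0 fstar].
Proof.
move=> Hn HM _ HB; exists (@fs R n); split.
- exact: fs_SCF.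
- exact: fs_anon.
- exact: fs_BIC.
- exact: welfare_gt.
Qed.
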